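(* Let $\mathbb P\in\mathbb\Psi^m_H(M)$ with $\Re(m)<-d_H$, and write $\mathbb k=(\mathcal L_Z-m)\mathbb P$. For every integer $n\ge1$ and $h\ge0$, \[\mathrm{tr}_h(\mathbb P)=\sum_{j=0}^{n-1}\frac{h^j}{j!\,(j-m-d_H)}\mathrm{tr}_0^{(j)}(\mathbb k)+\frac{h^n}{(n-1)!}\int_0^1\mathrm{tr}^{(n)}_{hu}(\mathbb k)\,u^{n-m-d_H-1}\Big(\int_u^1t^{m+d_H-n}(1-t)^{n-1}dt\Big)du.\] In particular, if $P\in\Psi^m_H(M)$ and $\mathbb P_1=P$, \[\mathrm{tr}(P)=\sum_{j=0}^{n-1}\frac{1}{j!\,(j-m-d_H)}\mathrm{tr}_0^{(j)}(\mathbb k)+\frac{1}{(n-1)!}\int_0^1\mathrm{tr}^{(n)}_u(\mathbb k)\,u^{n-m-d_H-1}\,\mathrm B(1-u;n,m+d_H-n+1)\,du,\] where $\mathrm B(x;\alpha,\beta)=\int_0^xt^{\alpha-1}(1-t)^{\beta-1}dt$.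
   Context: $(M,H)$ Carnot manifold, homogeneous dimension $d_H$; $\mathbb T_HM$ its $H$-tangent groupoid over $M\times\mathbb R$; $\mathcal L_Z$ the generator of pushforward by the zoom action $\alpha_\lambda$ ($(x,y,h)\mapsto(x,y,\lambda^{-1}h)$, $((x,z),0)\mapsto((x,\delta_\lambda z),0)$). $\mathbb\Psi^m_H(M)$: $r$-fibred distributions $\mathbb P$ with $(\mathcal L_Z-m)\mathbb P\in C^\infty_p(\mathbb T_HM,\Omega_r)$ (smooth $r$-fibre densities, $r,s$-proper support); $\Psi^m_H(M)=\{\mathbb P_1\}$, $\mathbb P_1$ the restriction to $h=1$. Local trace $\mathrm{tr}_h$: restriction of a smooth $r$-fibre density to the unit space point $(x,x,h)$ (resp. $((x,0),0)$ at $h=0$), a density on $M$; $\mathrm{tr}^{(j)}_h(\mathbb f)=\frac{d^j}{dh^j}\mathrm{tr}_h(\mathbb f)$. For $\Re(m)<-d_H$, $\mathrm{tr}_h(\mathbb P)=\int_0^1\mathrm{tr}_{\lambda h}((\mathcal L_Z-m)\mathbb P)\lambda^{-m-d_H-1}d\lambda$, and $\mathrm{tr}(P):=\mathrm{tr}_1(\mathbb P)$. *)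

(* Defs.v *)
From Stdlib Require Import Reals Factorial.
From Coquelicot Require Import Coquelicot.
Open Scope R_scope.

(* F = (Fr, Fi) : h |-> tr_h(k), the local trace of the smooth r-fibre density
   k = (L_Z - m) P at the unit space point over a fixed x in M, written in a
   fixed trivialisation of the density line at x (real and imaginary parts).
   trk Fr Fi j h = tr_h^{(j)}(k) = d^j/dh^j tr_h(k). *)
Definition trk (Fr Fi : R -> R) (j : nat) (h : R) : C :=
  (Derive_n Fr j h, Derive_n Fi j h).

(* complex power t^z for real t > 0 : exp(z ln t) *)
Definition cpowR (t : R) (z : C) : C :=
  (exp (Re z * ln t) * cos (Im z * ln t), exp (Re z * ln t) * sin (Im z * ln t)).

Definition trP (m : C) (dH : nat) (Fr Fi : R -> R) (h : R) : C :=
  @RInt_gen C_R_CompleteNormedModule (fun l => Cmult (trk Fr Fi 0 (l * h)) (cpowR l (Copp m - RtoC (INR dH) - 1)%C))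
    (at_right 0) (at_point 1).

Definition incBeta (x : R) (a b : C) : C :=
  @RInt C_R_CompleteNormedModule (fun t => Cmult (cpowR t (a - 1)%C) (cpowR (1 - t) (b - 1)%C)) 0 x.

(* Main.v *)
Require Import Defs.
From Stdlib Require Import Reals Lra Lia Factorial.
From Coquelicot Require Import Coquelicot.
Open Scope R_scope.
Lemma plusC (x y : C) : @plus C_R_NormedModule x y = Cplus x y. Proof. reflexivity. Qed.
Lemma scalC (r : R) (x : C) : @scal R_AbsRing C_R_NormedModule r x = Cmult (RtoC r) x.
Proof. destruct x as [a b]. apply injective_projections; simpl; unfold scal; simpl; unfold mult; simpl; ring. Qed.
Lemma minusC (x y : C) : @minus C_R_NormedModule x y = Cminus x y. Proof. reflexivity. Qed.
Lemma oppC (x : C) : @opp C_R_NormedModule x = Copp x. Proof. reflexivity. Qed.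
Lemma zeroC : @zero C_R_NormedModule = RtoC 0. Proof. reflexivity. Qed.
Lemma is_derive_pairC (f g : R -> R) x df dg : is_derive f x df -> is_derive g x dg ->
  @is_derive R_AbsRing C_R_NormedModule (fun y => (f y, g y) : C) x ((df, dg) : C).
Proof.
intros H1 H2. unfold is_derive in *.
apply (filterdiff_ext_lin _ (fun y : R => ((scal y df, scal y dg) : C))).
- apply (filterdiff_comp'_2 f g (fun a b => (a,b)) x _ _ (fun a b => (a,b)) H1 H2).
  apply filterdiff_linear. apply is_linear_ext with (fun t => t). intros [a b]; reflexivity. apply is_linear_id.
- intros y. reflexivity.
Qed.
Lemma is_derive_fstC (f : R -> C) x l : @is_derive R_AbsRing C_R_NormedModule f x l ->
  is_derive (fun y => fst (f y)) x (fst l).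
Proof. intros H. unfold is_derive in *.
apply (filterdiff_ext_lin _ (fun y : R => fst (@scal R_AbsRing C_R_NormedModule y l))).
apply (filterdiff_comp' f (fun t : prod_NormedModule _ R_NormedModule R_NormedModule => fst t) x _ _ H).
apply filterdiff_linear, is_linear_fst. intros; reflexivity. Qed.
Lemma is_derive_sndC (f : R -> C) x l : @is_derive R_AbsRing C_R_NormedModule f x l ->
  is_derive (fun y => snd (f y)) x (snd l).
Proof. intros H. unfold is_derive in *.
apply (filterdiff_ext_lin _ (fun y : R => snd (@scal R_AbsRing C_R_NormedModule y l))).
apply (filterdiff_comp' f (fun t : prod_NormedModule _ R_NormedModule R_NormedModule => snd t) x _ _ H).
apply filterdiff_linear, is_linear_snd. intros; reflexivity. Qed.

Lemma continuous_pairC (f g : R -> R) x : continuous f x -> continuous g x ->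
  @continuous R_UniformSpace C_UniformSpace (fun y => (f y, g y) : C) x.
Proof.
intros H1 H2.
apply (continuous_comp_2 f g (fun a b => (a,b) : C) x H1 H2).
apply continuous_ext with (fun t => t). intros [a b]; reflexivity. apply continuous_id.
Qed.

Lemma continuous_fstC (f : R -> C) x : @continuous R_UniformSpace C_UniformSpace f x ->
  continuous (fun y => fst (f y)) x.
Proof. intros H. apply (continuous_comp f (fun t : prod_UniformSpace R_UniformSpace R_UniformSpace => fst t)); auto.
destruct (f x); apply continuous_fst. Qed.
Lemma continuous_sndC (f : R -> C) x : @continuous R_UniformSpace C_UniformSpace f x ->
  continuous (fun y => snd (f y)) x.
Proof. intros H. apply (continuous_comp f (fun t : prod_UniformSpace R_UniformSpace R_UniformSpace => snd t)); auto.
destruct (f x); apply continuous_snd. Qed.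

Lemma dmult (f g : R -> R) x a b : is_derive f x a -> is_derive g x b ->
  is_derive (fun y => f y * g y) x (a * g x + f x * b).
Proof. intros; apply (is_derive_mult f g); auto. intros; apply Rmult_comm. Qed.
Lemma dplus (f g : R -> R) x a b : is_derive f x a -> is_derive g x b ->
  is_derive (fun y => f y + g y) x (a + b).
Proof. intros; apply (is_derive_plus f g); auto. Qed.
Lemma dminus (f g : R -> R) x a b : is_derive f x a -> is_derive g x b ->
  is_derive (fun y => f y - g y) x (a - b).
Proof. intros; apply (is_derive_minus f g); auto. Qed.

Lemma cmultR (f g : R -> R) x : continuous f x -> continuous g x -> continuous (fun y => f y * g y) x.
Proof. intros; apply (continuous_mult f g); auto. Qed.
Lemma cplusR (f g : R -> R) x : continuous f x -> continuous g x -> continuous (fun y => f y + g y) x.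
Proof. intros; apply (continuous_plus f g); auto. Qed.
Lemma cminusR (f g : R -> R) x : continuous f x -> continuous g x -> continuous (fun y => f y - g y) x.
Proof. intros; apply (continuous_minus f g); auto. Qed.

Notation dC := (@is_derive R_AbsRing C_R_NormedModule).
Notation cC := (@continuous R_UniformSpace C_UniformSpace).

Lemma dCmult (f g : R -> C) x a b : dC f x a -> dC g x b ->
  dC (fun y => Cmult (f y) (g y)) x (Cplus (Cmult a (g x)) (Cmult (f x) b)).
Proof.
intros Hf Hg.
apply is_derive_fstC in Hf as Hf1. apply is_derive_sndC in Hf as Hf2.
apply is_derive_fstC in Hg as Hg1. apply is_derive_sndC in Hg as Hg2.
eapply is_derive_ext. intros t. symmetry. apply surjective_pairing.
replace (Cplus (Cmult a (g x)) (Cmult (f x) b)) with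
  (((fst a * fst (g x) + fst (f x) * fst b - (snd a * snd (g x) + snd (f x) * snd b)),
   (fst a * snd (g x) + fst (f x) * snd b + (snd a * fst (g x) + snd (f x) * fst b))) : C).
2:{ destruct a, b, (f x), (g x); unfold Cplus, Cmult; simpl; apply injective_projections; simpl; ring. }
apply is_derive_pairC; simpl.
- apply dminus; apply dmult; auto.
- apply dplus; apply dmult; auto.
Qed.

Lemma cCmult (f g : R -> C) x : cC f x -> cC g x -> cC (fun y => Cmult (f y) (g y)) x.
Proof.
intros Hf Hg.
apply continuous_fstC in Hf as Hf1. apply continuous_sndC in Hf as Hf2.
apply continuous_fstC in Hg as Hg1. apply continuous_sndC in Hg as Hg2.
eapply continuous_ext. intros t. symmetry. apply surjective_pairing.
apply continuous_pairC; simpl.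
- apply cminusR; apply cmultR; auto.
- apply cplusR; apply cmultR; auto.
Qed.
Lemma cCplus (f g : R -> C) x : cC f x -> cC g x -> cC (fun y => Cplus (f y) (g y)) x.
Proof. intros; apply (continuous_plus (V:=C_R_NormedModule) f g); auto. Qed.
Lemma cCminus (f g : R -> C) x : cC f x -> cC g x -> cC (fun y => Cminus (f y) (g y)) x.
Proof. intros; apply (continuous_minus (V:=C_R_NormedModule) f g); auto. Qed.
Lemma dCplus (f g : R -> C) x a b : dC f x a -> dC g x b -> dC (fun y => Cplus (f y) (g y)) x (Cplus a b).
Proof. intros; apply (is_derive_plus (V:=C_R_NormedModule) f g); auto. Qed.
Lemma dCminus (f g : R -> C) x a b : dC f x a -> dC g x b -> dC (fun y => Cminus (f y) (g y)) x (Cminus a b).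
Proof. intros; apply (is_derive_minus (V:=C_R_NormedModule) f g); auto. Qed.
Lemma cCconst (c : C) x : cC (fun _ => c) x.
Proof. apply continuous_const. Qed.
Lemma dCconst (c : C) x : dC (fun _ => c) x (RtoC 0).
Proof. apply (is_derive_const (V:=C_R_NormedModule)). Qed.
Lemma cCR (f : R -> R) x : continuous f x -> cC (fun y => RtoC (f y)) x.
Proof. intros; apply continuous_pairC; auto. apply continuous_const. Qed.
Lemma dCR (f : R -> R) x a : is_derive f x a -> dC (fun y => RtoC (f y)) x (RtoC a).
Proof. intros; apply is_derive_pairC; auto. apply (is_derive_const (V:=R_NormedModule)). Qed.
Lemma dC_cont (f : R -> C) x a : dC f x a -> cC f x.
Proof. intros H. apply (ex_derive_continuous (V:=C_R_NormedModule)). exists a; exact H. Qed.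
Lemma cpowR_mult t z1 z2 : Cmult (cpowR t z1) (cpowR t z2) = cpowR t (Cplus z1 z2).
Proof. destruct z1 as [a b], z2 as [c d]. unfold cpowR, Cmult, Cplus; simpl.
apply injective_projections; simpl.
- rewrite Rmult_plus_distr_r, exp_plus, Rmult_plus_distr_r, cos_plus. ring.
- rewrite Rmult_plus_distr_r, exp_plus, Rmult_plus_distr_r, sin_plus. ring.
Qed.
Lemma cpowR_0 t : cpowR t (RtoC 0) = RtoC 1.
Proof. unfold cpowR, RtoC; simpl. rewrite !Rmult_0_l, exp_0, cos_0, sin_0. apply injective_projections; simpl; ring. Qed.
Lemma cpowR_1 t : 0 < t -> cpowR t (RtoC 1) = RtoC t.
Proof. intros Ht. unfold cpowR, RtoC; simpl. rewrite Rmult_0_l, Rmult_1_l, exp_ln, cos_0, sin_0 by auto.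
apply injective_projections; simpl; ring. Qed.
Lemma cpowR_one z : cpowR 1 z = RtoC 1.
Proof. unfold cpowR, RtoC; rewrite ln_1, !Rmult_0_r, exp_0, cos_0, sin_0. apply injective_projections; simpl; ring. Qed.
Lemma cpowR_nat t k : 0 < t -> cpowR t (RtoC (INR k)) = RtoC (t ^ k).
Proof. intros Ht. unfold cpowR, RtoC; simpl. rewrite Rmult_0_l, cos_0, sin_0.
rewrite <- Rpower_pow by auto. unfold Rpower. apply injective_projections; simpl; ring. Qed.
Lemma cpowR_derive t z : 0 < t ->
  @is_derive R_AbsRing C_R_NormedModule (fun s => cpowR s z) t (Cmult z (Cmult (RtoC (/t)) (cpowR t z))).
Proof.
intros Ht. destruct z as [a b]. unfold cpowR, Cmult, RtoC; simpl.
apply is_derive_pairC.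
- auto_derive. auto. simpl. field. lra.
- auto_derive. auto. simpl. field. lra.
Qed.

Definition pw (t : R) (z : C) : C := if Rle_dec t 0 then RtoC 0 else cpowR t z.

Lemma locally_gt0 x : 0 < x -> locally x (fun y => 0 < y).
Proof. intros Hx. exists (mkposreal x Hx). intros y Hy. cbn in Hy.
unfold ball in Hy; simpl in Hy; unfold AbsRing_ball, abs, minus, plus, opp in Hy; simpl in Hy.
apply Rabs_lt_between in Hy. lra. Qed.
Lemma locally_lt0 x : x < 0 -> locally x (fun y => y < 0).
Proof. intros Hx. assert (H: 0 < -x) by lra. exists (mkposreal _ H). intros y Hy. cbn in Hy.
unfold ball in Hy; simpl in Hy; unfold AbsRing_ball, abs, minus, plus, opp in Hy; simpl in Hy.
apply Rabs_lt_between in Hy. lra. Qed.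

Lemma cpowR_cont t z : 0 < t -> cC (fun s => cpowR s z) t.
Proof. intros Ht. eapply dC_cont. apply cpowR_derive; auto. Qed.

Lemma pw_pos t z : 0 < t -> pw t z = cpowR t z.
Proof. intros Ht. unfold pw. destruct (Rle_dec t 0); auto. lra. Qed.
Lemma pw_npos t z : t <= 0 -> pw t z = RtoC 0.
Proof. intros Ht. unfold pw. destruct (Rle_dec t 0); auto. lra. Qed.

Lemma small_exp c eps : 0 < c -> 0 < eps -> exists d, 0 < d /\ forall y, 0 < y < d -> exp (c * ln y) < eps.
Proof. intros Hc He. exists (exp (ln eps / c)). split. apply exp_pos.
intros y [Hy1 Hy2]. rewrite <- (exp_ln eps) by auto. apply exp_increasing.
apply ln_increasing in Hy2; auto. rewrite ln_exp in Hy2.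
apply (Rmult_lt_compat_l c) in Hy2; auto. replace (c * (ln eps / c)) with (ln eps) in Hy2 by (field; lra). lra. Qed.

Lemma ballR0 (y e : R) : Rabs y < e -> @ball R_UniformSpace 0 e y.
Proof. intros H. unfold ball; simpl; unfold AbsRing_ball, abs, minus, plus, opp; simpl. rewrite Ropp_0, Rplus_0_r. auto. Qed.

Lemma pw_cont z x : 0 < Re z -> cC (fun t => pw t z) x.
Proof.
intros Hz. destruct (Rlt_le_dec 0 x) as [Hx|Hx].
- apply continuous_ext_loc with (fun t => cpowR t z).
  + generalize (locally_gt0 x Hx). apply filter_imp. intros y Hy. symmetry; apply pw_pos; auto.
  + apply cpowR_cont; auto.
- destruct (Rle_lt_or_eq_dec _ _ Hx) as [Hx'|Hx'].
  + apply continuous_ext_loc with (fun t => RtoC 0).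
    * generalize (locally_lt0 x Hx'). apply filter_imp. intros y Hy. symmetry; apply pw_npos; lra.
    * apply cCconst.
  + subst x. unfold continuous. rewrite pw_npos by lra.
    apply filterlim_locally. intros eps.
    destruct (small_exp (Re z) eps Hz (cond_pos eps)) as [d [Hd Hd2]].
    exists (mkposreal d Hd). intros y Hy. cbn in Hy.
    unfold ball in Hy; simpl in Hy; unfold AbsRing_ball, abs, minus, plus, opp in Hy; simpl in Hy.
    try rewrite Ropp_0, Rplus_0_r in Hy.
    unfold pw. destruct (Rle_dec y 0).
    * apply ball_center.
    * assert (Hy': 0 < y < d) by (apply Rabs_lt_between in Hy; lra).
      specialize (Hd2 y Hy'). unfold cpowR.
      split; apply ballR0; simpl; rewrite Rabs_mult, Rabs_pos_eq by (left; apply exp_pos);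
      (eapply Rle_lt_trans; [|apply Hd2]); rewrite <- (Rmult_1_r (exp _)) at 2;
      (apply Rmult_le_compat_l; [left; apply exp_pos|]); apply Rabs_le.
      -- generalize (COS_bound (Im z * ln y)); lra.
      -- generalize (SIN_bound (Im z * ln y)); lra.
Qed.

Fixpoint Kf (a : C) (n : nat) (u : R) : C :=
  match n with
  | O => pw u a
  | S k => Cmult (Cinv (Cplus (RtoC (INR (S k))) a))
             (Cminus (RtoC ((1 - u) ^ k / INR (fact k))) (Cmult (RtoC u) (Kf a k u)))
  end.

Lemma cnz (a : C) k : -1 < Re a -> Cplus (RtoC (INR (S k))) a <> RtoC 0.
Proof. intros Ha H. apply (f_equal fst) in H. change (INR (S k) + fst a = 0) in H. rewrite S_INR in H.
generalize (pos_INR k). unfold Re in Ha. lra. Qed.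

Lemma upw u a : Cmult (RtoC u) (pw u a) = pw u (Cplus a (RtoC 1)).
Proof. destruct (Rle_dec u 0) as [H|H].
- rewrite !pw_npos by auto. apply injective_projections; simpl; ring.
- rewrite !pw_pos by lra. rewrite <- cpowR_1 at 1 by lra. rewrite cpowR_mult. f_equal. ring. Qed.

Lemma creal (f : R -> R) x : (forall y, ex_derive f y) -> continuous f x.
Proof. intros H. apply (ex_derive_continuous (K:=R_AbsRing) (V:=R_NormedModule)). auto. Qed.

Lemma K_cont a k x : 0 < Re a + 1 -> cC (Kf a (S k)) x.
Proof.
intros Ha. induction k.
- apply continuous_ext with (fun u => Cmult (Cinv (Cplus (RtoC (INR 1)) a))
      (Cminus (RtoC 1) (pw u (Cplus a (RtoC 1))))).
  + intros u. simpl Kf. rewrite upw. change (INR 1) with 1. replace (1/1) with 1 by field. reflexivity.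
  + apply cCmult. apply cCconst. apply cCminus. apply cCconst. apply pw_cont. unfold Re in *; simpl; lra.
- change (cC (fun u => Cmult (Cinv (Cplus (RtoC (INR (S (S k)))) a))
             (Cminus (RtoC ((1 - u) ^ (S k) / INR (fact (S k)))) (Cmult (RtoC u) (Kf a (S k) u)))) x).
  apply cCmult. apply cCconst. apply cCminus. apply cCR. apply creal. intros; auto_derive; auto.
  apply cCmult; auto. apply cCR. apply continuous_id.
Qed.

Lemma K0_derive a u : 0 < u -> dC (Kf a 0) u (Cmult a (Cmult (RtoC (/u)) (Kf a 0 u))).
Proof. intros Hu. simpl. rewrite pw_pos by auto.
apply is_derive_ext_loc with (fun s => cpowR s a).
generalize (locally_gt0 u Hu). apply filter_imp. intros y Hy. symmetry; apply pw_pos; auto.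
apply cpowR_derive; auto. Qed.

Lemma dCRmult (f : R -> C) x b : dC f x b ->
  dC (fun y => Cmult (RtoC y) (f y)) x (Cplus (f x) (Cmult (RtoC x) b)).
Proof. intros H. replace (Cplus (f x) (Cmult (RtoC x) b)) with (Cplus (Cmult (RtoC 1) (f x)) (Cmult (RtoC x) b)) by ring.
apply dCmult; auto. apply dCR. apply (is_derive_id (K:=R_AbsRing)). Qed.

Lemma dCcmult (f : R -> C) (c : C) x b : dC f x b ->
  dC (fun y => Cmult c (f y)) x (Cmult c b).
Proof. intros H. replace (Cmult c b) with (Cplus (Cmult (RtoC 0) (f x)) (Cmult c b)) by ring.
apply dCmult; auto. apply dCconst. Qed.

Lemma K_derive a k u : -1 < Re a -> 0 < u -> dC (Kf a (S k)) u (Copp (Kf a k u)).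
Proof.
intros Ha Hu. induction k.
- eapply is_derive_ext. intros t. reflexivity.
  replace (Copp (Kf a 0 u)) with (Cmult (Cinv (Cplus (RtoC (INR 1)) a))
     (Cminus (RtoC 0) (Cplus (Kf a 0 u) (Cmult (RtoC u) (Cmult a (Cmult (RtoC (/u)) (Kf a 0 u))))))).
  2:{ generalize (cnz a 0 Ha). simpl INR. intros Hc. rewrite RtoC_inv by lra.
      assert (Hu' : RtoC u <> RtoC 0) by (intros H; apply (f_equal fst) in H; simpl in H; lra).
      field. auto. }
  simpl Kf. apply dCcmult. apply dCminus.
  + replace (RtoC 0) with (RtoC 0) by reflexivity. apply dCR. simpl. 
    apply (is_derive_const (V:=R_NormedModule)).
  + apply dCRmult. apply K0_derive; auto.
- change (dC (fun u => Cmult (Cinv (Cplus (RtoC (INR (S (S k)))) a))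
             (Cminus (RtoC ((1 - u) ^ (S k) / INR (fact (S k)))) (Cmult (RtoC u) (Kf a (S k) u)))) u
     (Copp (Kf a (S k) u))).
  replace (Copp (Kf a (S k) u)) with (Cmult (Cinv (Cplus (RtoC (INR (S (S k)))) a))
     (Cminus (RtoC (- ((1 - u) ^ k / INR (fact k)))) (Cplus (Kf a (S k) u) (Cmult (RtoC u) (Copp (Kf a k u)))))).
  2:{ generalize (cnz a (S k) Ha) (cnz a k Ha). intros Hc1 Hc2.
      change (Kf a (S k) u) with (Cmult (Cinv (Cplus (RtoC (INR (S k))) a))
             (Cminus (RtoC ((1 - u) ^ k / INR (fact k))) (Cmult (RtoC u) (Kf a k u)))).
      rewrite (S_INR (S k)) in *.
      replace (RtoC (INR (S k) + 1)) with (Cplus (RtoC (INR (S k))) (RtoC 1)) in *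
        by (apply injective_projections; simpl; ring).
      replace (RtoC (- ((1 - u) ^ k / INR (fact k)))) with (Copp (RtoC ((1 - u) ^ k / INR (fact k))))
        by (apply injective_projections; simpl; ring).
      field. split; auto. }
  apply dCcmult. apply dCminus.
  + apply dCR. auto_derive. auto. change (match k with 0%nat => 1 | S _ => INR k + 1 end) with (INR (S k)). change (INR (fact k + k * fact k)) with (INR (fact (S k))). rewrite fact_simpl, mult_INR. replace (1 + - u) with (1 - u) by ring.
    field. split; [apply INR_fact_neq_0|]. apply not_0_INR; lia.
  + apply dCRmult. auto.
Qed.

Lemma K_at1 a k : Kf a (S k) 1 = RtoC 0.
Proof. induction k.
- simpl Kf. rewrite pw_pos by lra. rewrite cpowR_one. simpl. 
  replace (Cminus (RtoC (1/1)) (Cmult (RtoC 1) (RtoC 1))) with (RtoC 0).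
  ring. apply injective_projections; simpl; field.
- change (Cmult (Cinv (Cplus (RtoC (INR (S (S k)))) a))
             (Cminus (RtoC ((1 - 1) ^ (S k) / INR (fact (S k)))) (Cmult (RtoC 1) (Kf a (S k) 1))) = RtoC 0).
  rewrite IHk. replace ((1 - 1) ^ S k / INR (fact (S k))) with 0. 
  + replace (Cminus (RtoC 0) (Cmult (RtoC 1) (RtoC 0))) with (RtoC 0) by ring. ring.
  + rewrite Rminus_diag, pow_i by lia. unfold Rdiv; ring.
Qed.

Lemma K_at0 a k : Kf a (S k) 0 = Cmult (Cinv (Cplus (RtoC (INR (S k))) a)) (RtoC (/ INR (fact k))).
Proof. change (Cmult (Cinv (Cplus (RtoC (INR (S k))) a))
             (Cminus (RtoC ((1 - 0) ^ k / INR (fact k))) (Cmult (RtoC 0) (Kf a k 0))) =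
             Cmult (Cinv (Cplus (RtoC (INR (S k))) a)) (RtoC (/ INR (fact k)))).
f_equal. replace ((1 - 0) ^ k / INR (fact k)) with (/ INR (fact k)).
ring. rewrite Rminus_0_r, pow1. unfold Rdiv; ring. Qed.

Notation RIC := (@RInt C_R_CompleteNormedModule).
Notation isRIC := (@is_RInt C_R_NormedModule).

Lemma trk_derive Fr Fi (Hr : forall j x, ex_derive_n Fr j x) (Hi : forall j x, ex_derive_n Fi j x) j h u :
  dC (fun u => trk Fr Fi j (h * u)) u (Cmult (RtoC h) (trk Fr Fi (S j) (h * u))).
Proof.
unfold trk.
replace (Cmult (RtoC h) (Derive_n Fr (S j) (h * u), Derive_n Fi (S j) (h * u)))
  with ((h * Derive_n Fr (S j) (h * u), h * Derive_n Fi (S j) (h * u)) : C)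
  by (unfold Cmult, RtoC; apply injective_projections; simpl; ring).
apply is_derive_pairC.
- apply (is_derive_comp (Derive_n Fr j) (fun u => h * u)).
  + apply Derive_correct. apply (Hr (S j)).
  + auto_derive. auto. ring.
- apply (is_derive_comp (Derive_n Fi j) (fun u => h * u)).
  + apply Derive_correct. apply (Hi (S j)).
  + auto_derive. auto. ring.
Qed.

Lemma minusC2 (x y : C) : @minus C_R_CompleteNormedModule x y = Cminus x y. Proof. reflexivity. Qed.
Lemma plusC2 (x y : C) : @plus C_R_CompleteNormedModule x y = Cplus x y. Proof. reflexivity. Qed.
Lemma scalC2 (r : R) (x : C) : @scal R_AbsRing C_R_CompleteNormedModule r x = Cmult (RtoC r) x. Proof. apply scalC. Qed.
Ltac cring := match goal with |- ?A = ?B => change (@eq C A B) end; ring.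

Definition Gf Fr Fi a h k u := Cmult (trk Fr Fi k (h * u)) (Kf a k u).

Lemma dC_eq f x a b : dC f x a -> a = b -> dC f x b.
Proof. intros H ->; auto. Qed.

Lemma K_cont_pos a k x : -1 < Re a -> 0 < x -> cC (Kf a k) x.
Proof. intros Ha Hx. destruct k.
- eapply dC_cont. apply K0_derive; auto.
- eapply dC_cont. apply K_derive; auto. Qed.

Lemma G_cont Fr Fi (Hr : forall j x, ex_derive_n Fr j x) (Hi : forall j x, ex_derive_n Fi j x) a h k x :
  -1 < Re a -> 0 < x -> cC (Gf Fr Fi a h k) x.
Proof. intros Ha Hx. unfold Gf. apply cCmult. eapply dC_cont. apply trk_derive; auto.
apply K_cont_pos; auto. Qed.

Lemma exG Fr Fi (Hr : forall j x, ex_derive_n Fr j x) (Hi : forall j x, ex_derive_n Fi j x) a h k e :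
  -1 < Re a -> 0 < e <= 1 -> @ex_RInt C_R_NormedModule (Gf Fr Fi a h k) e 1.
Proof. intros Ha He. apply (ex_RInt_continuous (V:=C_R_CompleteNormedModule)).
intros z Hz. rewrite Rmin_left, Rmax_right in Hz by lra. apply G_cont; auto; lra. Qed.

Lemma ibp Fr Fi (Hr : forall j x, ex_derive_n Fr j x) (Hi : forall j x, ex_derive_n Fi j x) a h k e :
  -1 < Re a -> 0 < e <= 1 ->
  RIC (Gf Fr Fi a h k) e 1 = Cplus (Cmult (trk Fr Fi k (h * e)) (Kf a (S k) e))
                                   (Cmult (RtoC h) (RIC (Gf Fr Fi a h (S k)) e 1)).
Proof.
intros Ha He.
set (Phi := fun u => Cmult (trk Fr Fi k (h * u)) (Kf a (S k) u)).
set (dPhi := fun u => Cminus (Cmult (RtoC h) (Gf Fr Fi a h (S k) u)) (Gf Fr Fi a h k u)).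
assert (HD : isRIC dPhi e 1 (minus (Phi 1) (Phi e))).
{ apply (is_RInt_derive (V:=C_R_CompleteNormedModule)).
  - intros x Hx. rewrite Rmin_left, Rmax_right in Hx by lra.
    unfold Phi, dPhi. eapply dC_eq. apply dCmult. apply trk_derive; auto. apply K_derive; auto; lra.
    unfold Gf. match goal with |- ?A = ?B => change (@eq C A B) end. ring.
  - intros x Hx. rewrite Rmin_left, Rmax_right in Hx by lra. unfold dPhi.
    apply cCminus. apply cCmult. apply cCconst. apply G_cont; auto; lra. apply G_cont; auto; lra. }
assert (H2 : isRIC dPhi e 1 (minus (scal h (RIC (Gf Fr Fi a h (S k)) e 1)) (RIC (Gf Fr Fi a h k) e 1))).
{ apply (is_RInt_ext (V:=C_R_NormedModule) (fun y => @minus C_R_NormedModule (@scal R_AbsRing C_R_NormedModule h (Gf Fr Fi a h (S k) y)) (Gf Fr Fi a h k y))).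
  intros x _. unfold dPhi. rewrite minusC, scalC. reflexivity.
  apply (is_RInt_minus (V:=C_R_NormedModule)). apply (is_RInt_scal (V:=C_R_NormedModule)). apply (RInt_correct (V:=C_R_CompleteNormedModule)). apply exG; auto.
  apply (RInt_correct (V:=C_R_CompleteNormedModule)). apply exG; auto. }
apply (is_RInt_unique (V:=C_R_CompleteNormedModule)) in HD. apply (is_RInt_unique (V:=C_R_CompleteNormedModule)) in H2. rewrite HD in H2.
rewrite ?minusC, ?minusC2, ?scalC, ?scalC2 in H2. unfold Phi in H2. rewrite K_at1 in H2.
set (I0 := RIC (Gf Fr Fi a h k) e 1) in *. set (I1 := RIC (Gf Fr Fi a h (S k)) e 1) in *.
assert (E : Cminus (Cmult (trk Fr Fi k (h * 1)) (RtoC 0)) (Cmult (trk Fr Fi k (h * e)) (Kf a (S k) e))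
   = Cminus (Cmult (RtoC h) I1) I0) by exact H2.
replace I0 with (Cminus (Cmult (RtoC h) I1) (Cminus (Cmult (trk Fr Fi k (h * 1)) (RtoC 0))
        (Cmult (trk Fr Fi k (h * e)) (Kf a (S k) e)))).
cring. rewrite E. cring.
Qed.

Lemma gen_lim (f Phi : R -> C) :
  (forall e, 0 < e < 1 -> isRIC f e 1 (Phi e)) -> cC Phi 0 ->
  @is_RInt_gen C_R_NormedModule f (at_right 0) (at_point 1) (Phi 0).
Proof.
intros Hf Hc. unfold is_RInt_gen, filterlimi, filter_le, filtermapi. intros P HP.
assert (HL : locally 0 (fun e => P (Phi e))) by (apply Hc; auto).
assert (HL1 : locally 0 (fun e : R => e < 1)).
{ exists (mkposreal 1 Rlt_0_1). intros y Hy. cbn in Hy.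
  unfold ball in Hy; simpl in Hy; unfold AbsRing_ball, abs, minus, plus, opp in Hy; simpl in Hy.
  apply Rabs_lt_between in Hy. lra. }
apply Filter_prod with (fun e => 0 < e < 1 /\ P (Phi e)) (fun b => b = 1).
- unfold at_right, within. generalize (filter_and _ _ HL HL1). apply filter_imp.
  intros x [H1 H2] H3. split; auto.
- reflexivity.
- intros x y [Hx HPx] Hy. subst y. exists (Phi x). split; auto.
Qed.

Lemma gen_val (f Phi : R -> C) :
  (forall e, 0 < e < 1 -> isRIC f e 1 (Phi e)) -> cC Phi 0 ->
  @RInt_gen C_R_CompleteNormedModule f (at_right 0) (at_point 1) = Phi 0.
Proof. intros H1 H2. apply (is_RInt_gen_unique (V:=C_R_CompleteNormedModule)). apply gen_lim; auto. Qed.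

Lemma sum_SnC (f : nat -> C) k : sum_n f (S k) = Cplus (sum_n f k) (f (S k)).
Proof. rewrite sum_Sn. reflexivity. Qed.
Lemma sum_OC (f : nat -> C) : sum_n f 0 = f 0%nat.
Proof. apply sum_O. Qed.

Lemma taylor_sum Fr Fi (Hr : forall j x, ex_derive_n Fr j x) (Hi : forall j x, ex_derive_n Fi j x) a h e k :
  -1 < Re a -> 0 < e <= 1 ->
  RIC (Gf Fr Fi a h 0) e 1 =
  Cplus (sum_n (fun j => Cmult (RtoC (h ^ j)) (Cmult (trk Fr Fi j (h * e)) (Kf a (S j) e))) k)
        (Cmult (RtoC (h ^ (S k))) (RIC (Gf Fr Fi a h (S k)) e 1)).
Proof.
intros Ha He. induction k.
- rewrite sum_OC. rewrite (ibp Fr Fi Hr Hi a h 0 e Ha He).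
  replace (RtoC (h ^ 0)) with (RtoC 1) by (f_equal; simpl; ring).
  replace (RtoC (h ^ 1)) with (RtoC h) by (f_equal; simpl; ring). cring.
- rewrite sum_SnC, IHk. rewrite (ibp Fr Fi Hr Hi a h (S k) e Ha He).
  replace (RtoC (h ^ S (S k))) with (Cmult (RtoC (h ^ S k)) (RtoC h)).
  cring. rewrite <- RtoC_mult. f_equal. simpl. ring.
Qed.

Lemma trk_cont Fr Fi (Hr : forall j x, ex_derive_n Fr j x) (Hi : forall j x, ex_derive_n Fi j x) j h x :
  cC (fun u => trk Fr Fi j (h * u)) x.
Proof. eapply dC_cont. apply trk_derive; auto. Qed.

Lemma G_cont_all Fr Fi (Hr : forall j x, ex_derive_n Fr j x) (Hi : forall j x, ex_derive_n Fi j x) a h k x :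
  -1 < Re a -> cC (Gf Fr Fi a h (S k)) x.
Proof. intros Ha. unfold Gf. apply cCmult. apply trk_cont; auto. apply K_cont. lra. Qed.

Lemma RIC_cont Fr Fi (Hr : forall j x, ex_derive_n Fr j x) (Hi : forall j x, ex_derive_n Fi j x) a h k x :
  -1 < Re a -> cC (fun e => RIC (Gf Fr Fi a h (S k)) e 1) x.
Proof. intros Ha. eapply dC_cont.
apply (is_derive_RInt' (V:=C_R_NormedModule) (Gf Fr Fi a h (S k)) (fun e => RIC (Gf Fr Fi a h (S k)) e 1) x 1).
- apply filter_forall. intros y. apply (RInt_correct (V:=C_R_CompleteNormedModule)).
  apply (ex_RInt_continuous (V:=C_R_CompleteNormedModule)). intros; apply G_cont_all; auto.
- apply G_cont_all; auto.
Qed.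

Lemma sum_cont (F : nat -> R -> C) k x : (forall j, cC (F j) x) -> cC (fun e => sum_n (fun j => F j e) k) x.
Proof. intros H. induction k.
- apply continuous_ext with (F 0%nat). intros; rewrite sum_OC; auto. auto.
- apply continuous_ext with (fun e => Cplus (sum_n (fun j => F j e) k) (F (S k) e)).
  intros; rewrite sum_SnC; auto. apply cCplus; auto.
Qed.

Lemma cpowR_m1 t : 0 < t -> cpowR t (RtoC (-1)) = RtoC (/ t).
Proof. intros Ht. unfold cpowR, RtoC; simpl. rewrite Rmult_0_l, cos_0, sin_0.
replace (-1 * ln t) with (- ln t) by ring. rewrite exp_Ropp, exp_ln by auto.
apply injective_projections; simpl; ring. Qed.

Lemma cpowR_inv1 t z : 0 < t -> Cmult (RtoC (/t)) (cpowR t z) = cpowR t (Cminus z (RtoC 1)).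
Proof. intros Ht. rewrite <- cpowR_m1 by auto. rewrite cpowR_mult. f_equal. apply injective_projections; simpl; ring. Qed.

Lemma isRIC_cmult (f : R -> C) (c : C) a b l : @is_RInt C_R_NormedModule f a b l ->
  @is_RInt C_R_NormedModule (fun t => Cmult c (f t)) a b (Cmult c l).
Proof.
intros H.
apply (is_RInt_fct_extend_fst (U:=R_NormedModule) (V:=R_NormedModule)) in H as H1.
apply (is_RInt_fct_extend_snd (U:=R_NormedModule) (V:=R_NormedModule)) in H as H2.
destruct c as [c1 c2].
apply (is_RInt_fct_extend_pair (U:=R_NormedModule) (V:=R_NormedModule)
  (fun t => Cmult (c1, c2) (f t)) a b).
- simpl. apply (is_RInt_minus (V:=R_NormedModule) (fun t => c1 * fst (f t)) (fun t => c2 * snd (f t))).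
  + apply (is_RInt_scal (V:=R_NormedModule) (fun t => fst (f t)) a b c1). auto.
  + apply (is_RInt_scal (V:=R_NormedModule) (fun t => snd (f t)) a b c2). auto.
- simpl. apply (is_RInt_plus (V:=R_NormedModule) (fun t => c1 * snd (f t)) (fun t => c2 * fst (f t))).
  + apply (is_RInt_scal (V:=R_NormedModule) (fun t => snd (f t)) a b c1). auto.
  + apply (is_RInt_scal (V:=R_NormedModule) (fun t => fst (f t)) a b c2). auto.
Qed.

Definition wex a n := Copp (Cplus (RtoC (INR n)) (Cplus a (RtoC 1))).
Definition Jf a n u := RIC (fun t => Cmult (cpowR t (wex a n)) (RtoC ((1 - t) ^ (n - 1)))) u 1.

Lemma Jint_cont a n t : 0 < t -> cC (fun t => Cmult (cpowR t (wex a n)) (RtoC ((1 - t) ^ (n - 1)))) t.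
Proof. intros Ht. apply cCmult. apply cpowR_cont; auto. apply cCR. apply creal. intros; auto_derive; auto. Qed.

Lemma exJ a n u : 0 < u <= 1 -> @ex_RInt C_R_NormedModule (fun t => Cmult (cpowR t (wex a n)) (RtoC ((1 - t) ^ (n - 1)))) u 1.
Proof. intros Hu. apply (ex_RInt_continuous (V:=C_R_CompleteNormedModule)).
intros z Hz. rewrite Rmin_left, Rmax_right in Hz by lra. apply Jint_cont. lra. Qed.

Lemma J_rel a n u : 0 < u <= 1 ->
  Cminus (Cmult (wex a n) (Jf a (S n) u)) (Cmult (RtoC (INR n)) (Jf a n u)) =
  Cminus (RtoC (0 ^ n)) (Cmult (cpowR u (wex a n)) (RtoC ((1 - u) ^ n))).
Proof.
intros Hu.
set (phi := fun t => Cmult (cpowR t (wex a n)) (RtoC ((1 - t) ^ n))).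
set (f1 := fun t => Cmult (cpowR t (wex a (S n))) (RtoC ((1 - t) ^ (S n - 1)))).
set (f0 := fun t => Cmult (cpowR t (wex a n)) (RtoC ((1 - t) ^ (n - 1)))).
set (dphi := fun t => Cminus (Cmult (wex a n) (f1 t)) (Cmult (RtoC (INR n)) (f0 t))).
assert (HD : isRIC dphi u 1 (minus (phi 1) (phi u))).
{ apply (is_RInt_derive (V:=C_R_CompleteNormedModule)).
  - intros x Hx. rewrite Rmin_left, Rmax_right in Hx by lra.
    unfold phi, dphi. eapply dC_eq. apply dCmult. apply cpowR_derive; lra.
    apply dCR. apply (is_derive_pow (fun t => 1 - t) n x (-1)).
    auto_derive; auto; ring.
    unfold f1, f0. match goal with |- ?A = ?B => change (@eq C A B) end.
    rewrite (cpowR_inv1 x) by lra.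
    replace (Cminus (wex a n) (RtoC 1)) with (wex a (S n)).
    2:{ unfold wex. rewrite S_INR. apply injective_projections; simpl; ring. }
    replace (S n - 1)%nat with n by lia.
    replace (n - 1)%nat with (Init.Nat.pred n) by lia.
    replace (RtoC (INR n * -1 * (1 - x) ^ Init.Nat.pred n)) with
      (Cmult (RtoC (-1)) (Cmult (RtoC (INR n)) (RtoC ((1 - x) ^ Init.Nat.pred n))))
      by (rewrite <- !RtoC_mult; f_equal; ring).
    replace (RtoC (-1)) with (Copp (RtoC 1)) by (apply injective_projections; simpl; ring).
    ring.
  - intros x Hx. rewrite Rmin_left, Rmax_right in Hx by lra. unfold dphi.
    apply cCminus; apply cCmult; try apply cCconst. apply Jint_cont; lra. apply Jint_cont; lra. }
assert (H2 : isRIC dphi u 1 (Cminus (Cmult (wex a n) (Jf a (S n) u)) (Cmult (RtoC (INR n)) (Jf a n u)))).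
{ apply (is_RInt_ext (V:=C_R_NormedModule) (fun t => @minus C_R_NormedModule (Cmult (wex a n) (f1 t)) (Cmult (RtoC (INR n)) (f0 t)))).
  intros; reflexivity.
  apply (is_RInt_minus (V:=C_R_NormedModule)); apply isRIC_cmult; apply (RInt_correct (V:=C_R_CompleteNormedModule)); apply exJ; auto. }
apply (is_RInt_unique (V:=C_R_CompleteNormedModule)) in HD. apply (is_RInt_unique (V:=C_R_CompleteNormedModule)) in H2.
rewrite HD in H2. rewrite <- H2. unfold phi. rewrite cpowR_one, Rminus_diag.
change (Cminus (Cmult (RtoC 1) (RtoC (0 ^ n))) (Cmult (cpowR u (wex a n)) (RtoC ((1 - u) ^ n))) =
  Cminus (RtoC (0 ^ n)) (Cmult (cpowR u (wex a n)) (RtoC ((1 - u) ^ n)))).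
ring.
Qed.

Lemma Cinj (x y : C) : fst x = fst y -> snd x = snd y -> x = y.
Proof. intros; apply injective_projections; auto. Qed.

Lemma Copp_neq0 (z : C) : z <> RtoC 0 -> Copp z <> RtoC 0.
Proof. intros H H'. apply H. replace z with (Copp (Copp z)) by ring. rewrite H'. apply Cinj; simpl; ring. Qed.

Lemma LK a k u : -1 < Re a -> 0 < u <= 1 ->
  Cmult (cpowR u (Cplus (RtoC (INR (S k))) a)) (Jf a (S k) u) = Cmult (RtoC (INR (fact k))) (Kf a (S k) u).
Proof.
intros Ha Hu. induction k.
- generalize (J_rel a 0 u Hu). intros HJ.
  set (J1 := Jf a 1 u) in *. set (J0 := Jf a 0 u) in *.
  set (P := cpowR u (Cplus (RtoC (INR 1)) a)).
  set (Q := cpowR u (wex a 0)) in *.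
  assert (PQ : Cmult P Q = RtoC 1).
  { unfold P, Q. rewrite cpowR_mult. rewrite <- (cpowR_0 u). f_equal. unfold wex.
    apply Cinj; simpl; ring. }
  assert (Hc := cnz a 0 Ha).
  assert (Hw : wex a 0 = Copp (Cplus (RtoC (INR 1)) a)) by (unfold wex; apply Cinj; simpl; ring).
  rewrite Hw in HJ.
  simpl Kf. rewrite upw. rewrite pw_pos by lra.
  replace (cpowR u (Cplus a (RtoC 1))) with P by (unfold P; f_equal; apply Cinj; simpl; ring).
  replace (RtoC (INR (fact 0))) with (RtoC 1) by (f_equal; simpl; ring).
  replace (RtoC ((1 - u) ^ 0 / INR (fact 0))) with (RtoC 1) by (f_equal; simpl; field).
  replace (RtoC (0 ^ 0)) with (RtoC 1) in HJ by (f_equal; simpl; ring).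
  replace (RtoC ((1 - u) ^ 0)) with (RtoC 1) in HJ by (f_equal; simpl; ring).
  change (INR 1) with 1 in *.
  replace J1 with (Cmult (Cinv (Copp (Cplus (RtoC 1) a))) (Cminus (RtoC 1) (Cmult Q (RtoC 1)))).
  2:{ rewrite <- HJ. change (INR 0) with 0. match goal with |- ?A = ?B => change (@eq C A B) end. field. all: repeat split; first [exact Hc | apply Copp_neq0; exact Hc]. }
  transitivity (Cmult (Cinv (Copp (Cplus (RtoC 1) a))) (Cminus P (Cmult P Q))). cring.
  rewrite PQ. replace (RtoC (1/1)) with (RtoC 1) by (f_equal; field). match goal with |- ?A = ?B => change (@eq C A B) end. field. intros H; apply Hc; exact H.
- generalize (J_rel a (S k) u Hu). intros HJ.
  set (J2 := Jf a (S (S k)) u) in *. set (J1 := Jf a (S k) u) in *.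
  set (P2 := cpowR u (Cplus (RtoC (INR (S (S k)))) a)).
  set (P1 := cpowR u (Cplus (RtoC (INR (S k))) a)) in *.
  set (Q := cpowR u (wex a (S k))) in *.
  set (r := (1 - u) ^ S k) in *.
  set (K1 := Kf a (S k) u) in *.
  assert (P2Q : Cmult P2 Q = RtoC 1).
  { unfold P2, Q. rewrite cpowR_mult. rewrite <- (cpowR_0 u). f_equal. unfold wex.
    rewrite (S_INR (S k)). apply Cinj; simpl; ring. }
  assert (P2u : P2 = Cmult (RtoC u) P1).
  { unfold P2, P1. rewrite <- (cpowR_1 u) by lra. rewrite cpowR_mult. f_equal.
    rewrite (S_INR (S k)). apply Cinj; simpl; ring. }
  assert (Hc := cnz a (S k) Ha).
  assert (Hw : wex a (S k) = Copp (Cplus (RtoC (INR (S (S k)))) a)).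
  { unfold wex. rewrite (S_INR (S k)). apply Cinj; simpl; ring. }
  rewrite Hw in HJ.
  replace (RtoC (0 ^ S k)) with (RtoC 0) in HJ by (f_equal; simpl; ring).
  set (c := Cplus (RtoC (INR (S (S k)))) a) in *.
  assert (HSk : RtoC (INR (S k)) <> RtoC 0).
  { intros H. apply (f_equal fst) in H. change (INR (S k) = 0) in H. revert H. apply not_0_INR. lia. }
  assert (Hfk : RtoC (INR (fact k)) <> RtoC 0).
  { intros H. apply (f_equal fst) in H. change (INR (fact k) = 0) in H. revert H. apply INR_fact_neq_0. }
  replace J2 with (Cmult (Cinv (Copp c)) (Cminus (Cmult (RtoC (INR (S k))) J1) (Cmult Q (RtoC r)))).
  2:{ replace (Cminus (Cmult (RtoC (INR (S k))) J1) (Cmult Q (RtoC r))) with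
        (Cmult (Copp c) J2).
      match goal with |- ?A = ?B => change (@eq C A B) end. field. exact Hc.
      replace (Cmult (Copp c) J2) with (Cplus (Cminus (Cmult (Copp c) J2) (Cmult (RtoC (INR (S k))) J1)) (Cmult (RtoC (INR (S k))) J1)) by cring.
      rewrite HJ. cring. }
  transitivity (Cmult (Cinv (Copp c)) (Cminus (Cmult (RtoC (INR (S k))) (Cmult P2 J1)) (Cmult (Cmult P2 Q) (RtoC r)))).
  cring.
  rewrite P2Q, P2u.
  replace (Cmult (Cmult (RtoC u) P1) J1) with (Cmult (RtoC u) (Cmult P1 J1)) by cring.
  rewrite IHk.
  change (Kf a (S (S k)) u) with (Cmult (Cinv c) (Cminus (RtoC (r / INR (fact (S k)))) (Cmult (RtoC u) K1))).
  replace (RtoC (r / INR (fact (S k)))) with (Cmult (RtoC r) (Cinv (Cmult (RtoC (INR (S k))) (RtoC (INR (fact k)))))).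
  2:{ rewrite fact_simpl, mult_INR. unfold Rdiv. rewrite RtoC_mult, RtoC_inv, RtoC_mult. reflexivity.
      apply Rmult_integral_contrapositive_currified. apply not_0_INR; lia. apply INR_fact_neq_0. }
  replace (RtoC (INR (fact (S k)))) with (Cmult (RtoC (INR (S k))) (RtoC (INR (fact k)))).
  2:{ rewrite fact_simpl, mult_INR, RtoC_mult. reflexivity. }
  match goal with |- ?A = ?B => change (@eq C A B) end. field. all: repeat split; first [assumption | apply Copp_neq0; assumption].
Qed.

Lemma core Fr Fi (Hr : forall j x, ex_derive_n Fr j x) (Hi : forall j x, ex_derive_n Fi j x) a h k (f : R -> C) :
  -1 < Re a -> (forall u, 0 < u < 1 -> f u = Cmult (trk Fr Fi 0 (u * h)) (cpowR u a)) ->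
  @RInt_gen C_R_CompleteNormedModule f (at_right 0) (at_point 1) =
  Cplus (sum_n (fun j => Cmult (RtoC (h ^ j)) (Cmult (trk Fr Fi j 0) (Kf a (S j) 0))) k)
        (Cmult (RtoC (h ^ (S k))) (RIC (Gf Fr Fi a h (S k)) 0 1)).
Proof.
intros Ha Hf.
set (Phi := fun e => Cplus (sum_n (fun j => Cmult (RtoC (h ^ j)) (Cmult (trk Fr Fi j (h * e)) (Kf a (S j) e))) k)
        (Cmult (RtoC (h ^ (S k))) (RIC (Gf Fr Fi a h (S k)) e 1))).
transitivity (Phi 0).
- apply gen_val.
  + intros e He. unfold Phi. rewrite <- (taylor_sum Fr Fi Hr Hi a h e k Ha) by lra.
    apply (is_RInt_ext (V:=C_R_NormedModule) (Gf Fr Fi a h 0)).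
    * intros x Hx. rewrite Rmin_left, Rmax_right in Hx by lra. rewrite Hf by lra.
      unfold Gf. simpl Kf. rewrite pw_pos by lra. rewrite Rmult_comm. reflexivity.
    * apply (RInt_correct (V:=C_R_CompleteNormedModule)). apply exG; auto. lra.
  + unfold Phi. apply cCplus.
    * apply (sum_cont (fun j e => Cmult (RtoC (h ^ j)) (Cmult (trk Fr Fi j (h * e)) (Kf a (S j) e)))).
      intros j. apply cCmult. apply cCconst. apply cCmult. apply trk_cont; auto. apply K_cont; lra.
    * apply cCmult. apply cCconst. apply RIC_cont; auto.
- unfold Phi. rewrite Rmult_0_r. reflexivity.
Qed.

Lemma rem Fr Fi (Hr : forall j x, ex_derive_n Fr j x) (Hi : forall j x, ex_derive_n Fi j x) a h k (f : R -> C) :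
  -1 < Re a ->
  (forall u, 0 < u < 1 -> f u = Cmult (Cmult (trk Fr Fi (S k) (h * u)) (cpowR u (Cplus (RtoC (INR (S k))) a))) (Jf a (S k) u)) ->
  @RInt_gen C_R_CompleteNormedModule f (at_right 0) (at_point 1) =
  Cmult (RtoC (INR (fact k))) (RIC (Gf Fr Fi a h (S k)) 0 1).
Proof.
intros Ha Hf.
set (Phi := fun e => Cmult (RtoC (INR (fact k))) (RIC (Gf Fr Fi a h (S k)) e 1)).
apply (gen_val f Phi).
- intros e He. unfold Phi.
  apply (is_RInt_ext (V:=C_R_NormedModule) (fun u => Cmult (RtoC (INR (fact k))) (Gf Fr Fi a h (S k) u))).
  + intros x Hx. rewrite Rmin_left, Rmax_right in Hx by lra. rewrite Hf by lra.
    unfold Gf. rewrite <- Cmult_assoc, (LK a k x Ha) by lra. cring.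
  + apply isRIC_cmult. apply (RInt_correct (V:=C_R_CompleteNormedModule)). apply exG; auto. lra.
- unfold Phi. apply cCmult. apply cCconst. apply RIC_cont; auto.
Qed.

Lemma incB k b u : 0 < u < 1 ->
  incBeta (1 - u) (RtoC (INR (S k))) b =
  RIC (fun t => Cmult (cpowR t (Cminus b (RtoC 1))) (RtoC ((1 - t) ^ k))) u 1.
Proof.
intros Hu. unfold incBeta.
set (g := fun t => Cmult (RtoC (t ^ k)) (cpowR (1 - t) (Cminus b (RtoC 1)))).
assert (Hg : forall t, t < 1 -> cC g t).
{ intros t Ht. unfold g. apply cCmult. apply cCR. apply creal. intros; auto_derive; auto.
  apply (continuous_comp (fun t => 1 - t) (fun s => cpowR s (Cminus b (RtoC 1)))).
  apply creal. intros; auto_derive; auto. apply cpowR_cont. lra. }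
rewrite (RInt_ext (V:=C_R_CompleteNormedModule) _ g).
2:{ intros x Hx. rewrite Rmin_left, Rmax_right in Hx by lra. unfold g.
    replace (Cminus (RtoC (INR (S k))) (RtoC 1)) with (RtoC (INR k)) by (rewrite S_INR; apply Cinj; simpl; ring).
    rewrite cpowR_nat by lra. reflexivity. }
set (L := RIC g 0 (1 - u)).
assert (H0 : isRIC g 0 (1 - u) L).
{ apply (RInt_correct (V:=C_R_CompleteNormedModule)). apply (ex_RInt_continuous (V:=C_R_CompleteNormedModule)).
  intros z Hz. rewrite Rmin_left, Rmax_right in Hz by lra. apply Hg. lra. }
apply (is_RInt_swap (V:=C_R_NormedModule)) in H0.
assert (H1 : isRIC g (-1 * u + 1) (-1 * 1 + 1) (opp L)).
{ replace (-1 * u + 1) with (1 - u) by ring. replace (-1 * 1 + 1) with 0 by ring. exact H0. }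
apply (is_RInt_comp_lin (V:=C_R_NormedModule)) in H1.
apply (is_RInt_scal (V:=C_R_NormedModule) _ _ _ (-1)) in H1.
symmetry. apply (is_RInt_unique (V:=C_R_CompleteNormedModule)).
replace L with (@scal R_AbsRing C_R_NormedModule (-1) (@opp C_R_NormedModule L)).
2:{ rewrite scalC. change (@opp C_R_NormedModule L) with (Copp L). apply Cinj; simpl; ring. }
refine (is_RInt_ext (V:=C_R_NormedModule) _ _ _ _ _ _ H1).
intros x Hx. rewrite Rmin_left, Rmax_right in Hx by lra.
rewrite !scalC. unfold g. replace (1 - (-1 * x + 1)) with x by ring. replace (-1 * x + 1) with (1 - x) by ring.
replace (RtoC (-1)) with (Copp (RtoC 1)) by (apply Cinj; simpl; ring). cring.
Qed.

Lemma RtoC_neq (x : R) : x <> 0 -> RtoC x <> RtoC 0.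
Proof. intros H H'. apply H. apply (f_equal fst) in H'. exact H'. Qed.

Theorem mainTheorem9 (m : C) (dH : nat) (Fr Fi : R -> R)
  (HdH : (0 < dH)%nat) (Hm : Re m < - INR dH)
  (Hr : forall (j : nat) (x : R), ex_derive_n Fr j x)
  (Hi : forall (j : nat) (x : R), ex_derive_n Fi j x)
  (n : nat) (Hn : (1 <= n)%nat) :
  (forall h : R, 0 <= h ->
     trP m dH Fr Fi h =
     (sum_n (fun j : nat =>
        Cmult (RtoC (h ^ j) / (RtoC (INR (fact j)) * (RtoC (INR j) - m - RtoC (INR dH))))%C
              (trk Fr Fi j 0)) (n - 1)
      + Cmult (RtoC (h ^ n / INR (fact (n - 1))))
          (@RInt_gen C_R_CompleteNormedModule (fun u =>
             Cmult (Cmult (trk Fr Fi n (h * u))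
                          (cpowR u (RtoC (INR n) - m - RtoC (INR dH) - 1)%C))
                   (@RInt C_R_CompleteNormedModule (fun t => Cmult (cpowR t (m + RtoC (INR dH) - RtoC (INR n))%C)
                                         (RtoC ((1 - t) ^ (n - 1)))) u 1))
             (at_right 0) (at_point 1)))%C)
  /\
  trP m dH Fr Fi 1 =
  (sum_n (fun j : nat =>
     Cmult (1 / (RtoC (INR (fact j)) * (RtoC (INR j) - m - RtoC (INR dH))))%C
           (trk Fr Fi j 0)) (n - 1)
   + Cmult (RtoC (1 / INR (fact (n - 1))))
       (@RInt_gen C_R_CompleteNormedModule (fun u =>
          Cmult (Cmult (trk Fr Fi n u)
                       (cpowR u (RtoC (INR n) - m - RtoC (INR dH) - 1)%C))
                (incBeta (1 - u) (RtoC (INR n)) (m + RtoC (INR dH) - RtoC (INR n) + 1)%C))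
          (at_right 0) (at_point 1)))%C.
Proof.
destruct n as [|k]; [lia|]. replace (S k - 1)%nat with k by lia.
set (a := (Copp m - RtoC (INR dH) - 1)%C).
assert (Ha : -1 < Re a).
{ unfold a, Re in *. simpl. lra. }
assert (Hc : forall j, Cplus (RtoC (INR (S j))) a = (RtoC (INR j) - m - RtoC (INR dH))%C).
{ intros j. unfold a. rewrite S_INR. apply Cinj; simpl; ring. }
assert (Hexp1 : (RtoC (INR (S k)) - m - RtoC (INR dH) - 1)%C = Cplus (RtoC (INR (S k))) a).
{ unfold a. apply Cinj; simpl; ring. }
assert (HJ : forall u, (@RInt C_R_CompleteNormedModule (fun t => Cmult (cpowR t (m + RtoC (INR dH) - RtoC (INR (S k)))%C)
                                         (RtoC ((1 - t) ^ k))) u 1) = Jf a (S k) u).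
{ intros u. unfold Jf. apply (RInt_ext (V:=C_R_CompleteNormedModule)). intros x _.
  replace (S k - 1)%nat with k by lia. f_equal. f_equal. unfold wex, a. rewrite S_INR. apply Cinj; simpl; ring. }
assert (ALG : forall h X,
  Cplus (sum_n (fun j => Cmult (RtoC (h ^ j)) (Cmult (trk Fr Fi j 0) (Kf a (S j) 0))) k) (Cmult (RtoC (h ^ (S k))) X) =
  (sum_n (fun j : nat =>
        Cmult (RtoC (h ^ j) / (RtoC (INR (fact j)) * (RtoC (INR j) - m - RtoC (INR dH))))%C
              (trk Fr Fi j 0)) k
      + Cmult (RtoC (h ^ (S k) / INR (fact k))) (Cmult (RtoC (INR (fact k))) X))%C).
{ intros h X. f_equal.
  - apply sum_n_ext. intros j. rewrite K_at0. rewrite Hc.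
    assert (Hcj := cnz a j Ha). rewrite Hc in Hcj.
    assert (Hf := RtoC_neq _ (INR_fact_neq_0 j)).
    rewrite RtoC_inv by apply INR_fact_neq_0.
    match goal with |- ?A = ?B => change (@eq C A B) end. field. split; auto.
  - assert (Hf := RtoC_neq _ (INR_fact_neq_0 k)).
    unfold Rdiv. rewrite RtoC_mult, RtoC_inv by apply INR_fact_neq_0.
    match goal with |- ?A = ?B => change (@eq C A B) end. field. auto. }
split.
- intros h Hh. unfold trP.
  rewrite (core Fr Fi Hr Hi a h k _ Ha) by (intros; reflexivity).
  rewrite (rem Fr Fi Hr Hi a h k _ Ha).
  + apply ALG.
  + intros u Hu. rewrite HJ, Hexp1. reflexivity.
- unfold trP.
  rewrite (core Fr Fi Hr Hi a 1 k _ Ha) by (intros; reflexivity).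
  rewrite (rem Fr Fi Hr Hi a 1 k _ Ha).
  + rewrite ALG. f_equal.
    * apply sum_n_ext. intros j. rewrite pow1. reflexivity.
    * rewrite pow1. reflexivity.
  + intros u Hu. rewrite Hexp1, Rmult_1_l. f_equal.
    rewrite incB by auto. rewrite <- HJ. apply (RInt_ext (V:=C_R_CompleteNormedModule)). intros x _.
    f_equal. f_equal. apply Cinj; simpl; ring.
Qed.
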